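(* Let $\Lambda\subset\mathbb{Z}^n$ be an antichain lattice. Then $\Lambda$ is generic in the sense that it has a minimal Markov basis all of whose elements are fully supported if and only if $\Lambda$, as a subset of $\mathbb{Z}^n$, is generic in the sense that for every $\eta\in\mathbb{Z}^n$ with $T^o_\eta\cap\Lambda=\emptyset$, each face of $T_\eta$ contains at most one element of $\Lambda$.
   Context: An antichain lattice is a subgroup of $\mathbb{Z}^n$ whose distinct elements are pairwise incomparable in the componentwise order. $\alpha\in\mathbb{Z}^n$ is fully supported if $\alpha_i\ne0$ for all $i$. For $u\in\mathbb{N}^n$, the fiber $\mathcal{F}(u)=(u+\Lambda)\cap\mathbb{N}^n$. For a finite $\mathcal{B}\subseteq\Lambda$, $\mathcal{F}(u)_{\mathcal{B}}$ is the graph on $\mathcal{F}(u)$ with an edge $v$–$w$ iff $v-w\in\mathcal{B}$ or $w-v\in\mathcal{B}$. A Markov basis of $\Lambda$ is a finite $\mathcal{B}\subseteq\Lambda$ such that $\mathcal{F}(u)_{\mathcal{B}}$ is connected for every $u\in\mathbb{N}^n$; it is minimal if minimal under inclusion. $T_\eta=\eta-\mathbb{N}^n$, $T^o_\eta=\{\beta:\beta_i<\eta_i\ \forall i\}$; for nonempty $X\subseteq[n]$ the $X$-face of $T_\eta$ is $\{\alpha\in T_\eta:\alpha_i=\eta_i\ \forall i\in X\}$. *)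

(* Defs.v *)
From HB Require Import structures.
From mathcomp Require Import all_boot all_order all_algebra.
Set Implicit Arguments. Unset Strict Implicit. Unset Printing Implicit Defensive.
Import Order.TTheory GRing.Theory Num.Theory.
Local Open Scope ring_scope.

Notation zvec n := {ffun 'I_n -> int}.

Section Defs.
Variable n : nat.
Implicit Types (L : zvec n -> Prop) (B : seq (zvec n)) (u v w a b eta : zvec n).

Definition vle a b : Prop := forall i, a i <= b i.

Definition is_subgroup L : Prop :=
  L 0 /\ (forall a b, L a -> L b -> L (a - b)).

Definition antichain_lattice L : Prop :=
  is_subgroup L /\ (forall a b, L a -> L b -> a != b -> ~ vle a b /\ ~ vle b a).

Definition fully_supported a : Prop := forall i, a i != 0.

Definition in_Nn u : Prop := forall i, 0 <= u i.

Definition in_fiber L u v : Prop := in_Nn v /\ L (v - u).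

Definition fadj B : rel (zvec n) := fun v w => (v - w \in B) || (w - v \in B).

Definition fiber_connected L B u : Prop :=
  forall v w, in_fiber L u v -> in_fiber L u w ->
    exists p : seq (zvec n),
      (forall x, x \in p -> in_fiber L u x) /\ path (fadj B) v p /\ last v p = w.

Definition markov_basis L B : Prop :=
  (forall b, b \in B -> L b) /\ (forall u, in_Nn u -> fiber_connected L B u).

Definition minimal_markov_basis L B : Prop :=
  markov_basis L B /\
  (forall B', {subset B' <= B} -> markov_basis L B' -> {subset B <= B'}).

Definition in_T eta a : Prop := vle a eta.
Definition in_To eta a : Prop := forall i, a i < eta i.
Definition in_face eta (X : {set 'I_n}) a : Prop :=
  in_T eta a /\ (forall i, i \in X -> a i = eta i).

Definition markov_generic L : Prop :=
  exists B, minimal_markov_basis L B /\ (forall b, b \in B -> fully_supported b).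

Definition set_generic L : Prop :=
  forall eta, (forall a, L a -> ~ in_To eta a) ->
    forall X : {set 'I_n}, X != set0 ->
      forall a b, L a -> L b -> in_face eta X a -> in_face eta X b -> a = b.

End Defs.

(* Main.v *)
Require Import Defs.
From mathcomp Require Import all_boot all_order all_algebra zify.
From Stdlib Require Import Classical.
Import Order.TTheory GRing.Theory Num.Theory.
Set Implicit Arguments. Unset Strict Implicit. Unset Printing Implicit Defensive.
Local Open Scope ring_scope.

Lemma union_cov (K T : eqType) (Q : T -> Prop) (cov : K -> seq T -> Prop) (r : seq K) :
  (forall k s s', cov k s -> {subset s <= s'} -> cov k s') ->
  (forall k, k \in r -> exists s, (forall x, x \in s -> Q x) /\ cov k s) ->
  exists s, (forall x, x \in s -> Q x) /\ (forall k, k \in r -> cov k s).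
Proof.
move=> mono; elim: r => [|k r IH] H.
  by exists [::]; split => // x.
have [s1 [Q1 C1]] := H k (mem_head _ _).
have [s2 [Q2 C2]] := IH (fun k' hk' => H k' ltac:(by rewrite inE hk' orbT)).
exists (s1 ++ s2); split.
  by move=> x; rewrite mem_cat => /orP [/Q1|/Q2].
move=> k'; rewrite inE => /orP [/eqP ->|hk'].
  by apply: mono C1 _ => x hx; rewrite mem_cat hx.
by apply: mono (C2 _ hk') _ => x hx; rewrite mem_cat hx orbT.
Qed.

Definition eqX (I : finType) (X : {set I}) (a b : {ffun I -> int}) :=
  forall i, i \in X -> a i = b i.

Lemma dicksonX (I : finType) (N : nat) : forall (X : {set I}), (#|X| < N)%N ->
  forall A : {ffun I -> int} -> Prop,
  (forall a, A a -> forall i, i \in X -> 0 <= a i) ->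
  (forall a b, A a -> A b -> (forall i, i \in X -> a i <= b i) -> eqX X a b) ->
  exists s : seq {ffun I -> int}, (forall a, a \in s -> A a) /\
            (forall a, A a -> exists2 a', a' \in s & eqX X a a').
Proof.
elim: N => [|N IH] X // hX A Hnn Hac.
case: (classic (exists a0, A a0)) => [[a0 A0]|nA]; last first.
  exists [::]; split=> // a Aa; by case: nA; exists a.
pose r := [seq (i, t) | i <- enum X, t <- iota 0 `|a0 i|%N].
pose cov (k : I * nat) (s : seq {ffun I -> int}) := forall a, A a -> a k.1 = (k.2)%:Z ->
  exists2 a', a' \in s & (eqX (X :\ k.1) a a' /\ a' k.1 = (k.2)%:Z).
have [] := @union_cov _ _ A cov r.
- move=> k s s' C sub a Aa ak. have [a' a's [E1 E2]] := C a Aa ak.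
  by exists a' => //; apply: sub.
- move=> [i t]; rewrite /r => /allpairsPdep [i' [t' [hi ht E]]]; case: E => -> ->.
  have iX : i' \in X by rewrite mem_enum in hi.
  have hc : (#|X :\ i'| < N)%N.
    by move: hX; rewrite (cardsD1 i' X) iX add1n ltnS.
  have [||s [Qs Cs]] := IH (X :\ i') hc (fun a => A a /\ a i' = t'%:Z).
  + by move=> a [Aa _] j /setD1P [_ jX]; apply: Hnn.
  + move=> a b [Aa ea] [Ab eb] le j /setD1P [_ jX].
    apply: (Hac a b Aa Ab) => // k kX.
    case: (eqVneq k i') => [->|ne]; first by rewrite ea eb.
    by apply: le; rewrite in_setD1 ne kX.
  exists s; split; first by move=> x /Qs [].
  move=> a Aa ai. have [a' a's E] := Cs a (conj Aa ai).
  exists a' => //; split => //. by have [_ ->] := Qs a' a's.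
- move=> s [Qs Cs]. exists (a0 :: s). split.
  + by move=> a; rewrite inE => /orP [/eqP ->|/Qs].
  + move=> a Aa. case: (classic (forall i, i \in X -> a0 i <= a i)) => [le|nle].
    * exists a0; first by rewrite mem_head.
      by move=> i iX; symmetry; apply: (Hac a0 a A0 Aa le i iX).
    * have [i ni] := not_all_ex_not _ _ nle.
      have [iX nle'] := imply_to_and _ _ ni.
      have ai0 := Hnn a Aa i iX.
      have a00 := Hnn a0 A0 i iX.
      have lt : a i < a0 i by rewrite ltNge; apply/negP.
      have mem : (i, `|a i|%N) \in r.
        apply/allpairsPdep; exists i, `|a i|%N; split => //=; first by rewrite mem_enum.
        rewrite mem_iota add0n /=. lia.
      have [a' a's [E1 E2]] := Cs _ mem a Aa (esym (gez0_abs ai0)).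
      exists a'; first by rewrite inE a's orbT. move=> j jX. case: (eqVneq j i) => [->|ne].
        by rewrite E2 /= gez0_abs.
      by apply: E1; rewrite in_setD1 ne jX.
Qed.

Lemma dickson (I : finType) (A : {ffun I -> int} -> Prop) :
  (forall a, A a -> forall i, 0 <= a i) ->
  (forall a b, A a -> A b -> (forall i, a i <= b i) -> a = b) ->
  exists s : seq {ffun I -> int}, (forall a, a \in s -> A a) /\ (forall a, A a -> a \in s).
Proof.
move=> Hnn Hac.
have [||s [Qs Cs]] := @dicksonX I (#|[set: I]|.+1) [set: I] (ltnSn _) A.
- by move=> a Aa i _; apply: Hnn.
- by move=> a b Aa Ab le i _; rewrite (Hac a b Aa Ab (fun j => le j (in_setT j))).
exists s; split => // a Aa. have [a' a's E] := Cs a Aa.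
suff -> : a = a' by [].
by apply/ffunP => i; apply: E; rewrite in_setT.
Qed.

Lemma vaddE n (a b : zvec n) i : (a + b) i = a i + b i. Proof. by rewrite ffunE. Qed.
Lemma voppE n (a : zvec n) i : (- a) i = - a i. Proof. by rewrite ffunE. Qed.
Lemma vsubE n (a b : zvec n) i : (a - b) i = a i - b i. Proof. by rewrite !ffunE. Qed.
Lemma vzeroE n i : (0 : zvec n) i = 0. Proof. by rewrite ffunE. Qed.

Definition vmin n (p q : zvec n) : zvec n := [ffun m => Num.min (p m) (q m)].
Definition posv n (c : zvec n) : zvec n := [ffun i => Num.max (c i) 0].
Definition negv n (c : zvec n) : zvec n := [ffun i => Num.max (- c i) 0].
Lemma vminE n (p q : zvec n) i : vmin p q i = Num.min (p i) (q i). Proof. by rewrite ffunE. Qed.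
Lemma posvE n (c : zvec n) i : posv c i = Num.max (c i) 0. Proof. by rewrite ffunE. Qed.
Lemma negvE n (c : zvec n) i : negv c i = Num.max (- c i) 0. Proof. by rewrite ffunE. Qed.

Ltac ffsimp := repeat match goal with
 | H : context [@fun_of_fin _ _ _ (vmin _ _) _] |- _ => rewrite vminE in H
 | |- context [@fun_of_fin _ _ _ (vmin _ _) _] => rewrite vminE
 | H : context [@fun_of_fin _ _ _ (posv _) _] |- _ => rewrite posvE in H
 | |- context [@fun_of_fin _ _ _ (posv _) _] => rewrite posvE
 | H : context [@fun_of_fin _ _ _ (negv _) _] |- _ => rewrite negvE in H
 | |- context [@fun_of_fin _ _ _ (negv _) _] => rewrite negvE
 | H : context [@fun_of_fin _ _ _ (finfun _) _] |- _ => rewrite ffunE in H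
 | |- context [@fun_of_fin _ _ _ (finfun _) _] => rewrite ffunE
 | H : context [@fun_of_fin _ _ _ (_ - _) _] |- _ => rewrite vsubE in H
 | |- context [@fun_of_fin _ _ _ (_ - _) _] => rewrite vsubE
 | H : context [@fun_of_fin _ _ _ (_ + _) _] |- _ => rewrite vaddE in H
 | |- context [@fun_of_fin _ _ _ (_ + _) _] => rewrite vaddE
 | H : context [@fun_of_fin _ _ _ (- _) _] |- _ => rewrite voppE in H
 | |- context [@fun_of_fin _ _ _ (- _) _] => rewrite voppE
 | H : context [@fun_of_fin _ _ _ (@Algebra.zero _) _] |- _ => rewrite vzeroE in H
 | |- context [@fun_of_fin _ _ _ (@Algebra.zero _) _] => rewrite vzeroE
 end.
Ltac genapp :=
  repeat match goal with H : context [@fun_of_fin _ _ _ _ _] |- _ => revert H end;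
  repeat match goal with
   | |- context [@fun_of_fin ?I ?T ?P ?x ?i] =>
     let a := fresh "a" in set a := (@fun_of_fin I T P x i : int); clearbody a
  end.
Ltac vlia := ffsimp; genapp; lia.

Lemma L0 n (L : zvec n -> Prop) : antichain_lattice L -> L 0.
Proof. by case=> [[]]. Qed.
Lemma LB n (L : zvec n -> Prop) a b : antichain_lattice L -> L a -> L b -> L (a - b).
Proof. by case=> [[_ H]] _; apply: H. Qed.
Lemma LN n (L : zvec n -> Prop) a : antichain_lattice L -> L a -> L (- a).
Proof. move=> HL La; rewrite -sub0r; exact: LB HL (L0 HL) La. Qed.
Lemma LD n (L : zvec n -> Prop) a b : antichain_lattice L -> L a -> L b -> L (a + b).
Proof. move=> HL La Lb; rewrite -[b]opprK; exact: LB HL La (LN HL Lb). Qed.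

Lemma L_nn0 n (L : zvec n -> Prop) a : antichain_lattice L -> L a -> in_Nn a -> a = 0.
Proof.
move=> HL La ha; case: (eqVneq a 0) => // na.
have [H _] := HL.2 0 a (L0 HL) La ltac:(by rewrite eq_sym).
by case: H => i; rewrite vzeroE; apply: ha.
Qed.

Lemma fib_diff n (L : zvec n -> Prop) u x y : antichain_lattice L ->
  in_fiber L u x -> in_fiber L u y -> L (x - y).
Proof.
move=> HL [_ hx] [_ hy].
have -> : x - y = (x - u) - (y - u) by apply/ffunP => i; vlia.
exact: LB.
Qed.

Lemma fib_self n (L : zvec n -> Prop) u : antichain_lattice L -> in_Nn u -> in_fiber L u u.
Proof. by move=> HL hu; split => //; rewrite subrr; apply: L0. Qed.

Lemma fib_nonzero n (L : zvec n -> Prop) u x y : antichain_lattice L ->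
  in_fiber L u x -> in_fiber L u y -> x != y -> exists k, 0 < y k.
Proof.
move=> HL hx hy nxy; apply: NNPP => nk.
have y0 : y = 0.
  apply/ffunP => i; have := hy.1 i; have : ~ (0 < y i) by move=> h; apply: nk; exists i.
  vlia.
have Lx : L x by have := fib_diff HL hx hy; rewrite y0 subr0.
have := L_nn0 HL Lx hx.1; move=> x0; by rewrite x0 y0 eqxx in nxy.
Qed.

Definition vsum n (x : zvec n) : int := \sum_i x i.

Lemma seq_bound (T : eqType) (f : T -> int) (s : seq T) :
  exists M, forall x, x \in s -> f x <= M.
Proof.
elim: s => [|y s [M HM]]; first by exists 0.
exists (Num.max (f y) M) => x; rewrite inE => /orP [/eqP ->|/HM]; lia.
Qed.

Lemma fiber_bound n (L : zvec n -> Prop) u : antichain_lattice L -> in_Nn u ->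
  exists M, forall x, in_fiber L u x -> vsum x <= M.
Proof.
move=> HL hu.
have [|| s [_ Hs]] := @dickson 'I_n (in_fiber L u).
- by move=> a [ha _].
- move=> a b ha hb le.
  have Lba : L (b - a) := fib_diff HL hb ha.
  have : b - a = 0 by apply: L_nn0 HL Lba _ => i; have := le i; vlia.
  by move/eqP; rewrite subr_eq0 => /eqP.
have [M HM] := seq_bound (@vsum n) s.
by exists M => x hx; apply: HM; apply: Hs.
Qed.

Definition lower n (L : zvec n -> Prop) u' u :=
  in_Nn u' /\ exists e, in_Nn e /\ (exists j, 0 < e j) /\ L (u' + e - u).

Lemma fiber_ind n (L : zvec n -> Prop) (P : zvec n -> Prop) : antichain_lattice L ->
  (forall u, in_Nn u -> (forall u', lower L u' u -> P u') -> P u) ->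
  forall u, in_Nn u -> P u.
Proof.
move=> HL step.
suff H : forall N : nat, forall u, in_Nn u ->
    (forall x, in_fiber L u x -> vsum x < N%:Z) -> P u.
  move=> u hu; have [M HM] := fiber_bound HL hu.
  apply: (H (`|M|.+1)%N u hu) => x hx; have := HM x hx; lia.
elim=> [|N IH] u hu hb.
  have := hb u (fib_self HL hu).
  have : 0 <= vsum u by apply: sumr_ge0 => i _; apply: hu.
  lia.
apply: (step u hu) => u' [hu' [e [he [[j hj] hL]]]].
apply: (IH u' hu') => x [hx hxL].
have hxe : in_fiber L u (x + e).
  split; first by move=> i; have := hx i; have := he i; vlia.
  have -> : x + e - u = (x - u') + (u' + e - u) by apply/ffunP => i; vlia.
  exact: LD.
have := hb _ hxe.
have -> : vsum (x + e) = vsum x + vsum e.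
  by rewrite /vsum -big_split /=; apply: eq_bigr => i _; rewrite vaddE.
have : e j <= vsum e.
  rewrite /vsum (bigD1 j) //= lerDl; apply: sumr_ge0 => i _; apply: he.
lia.
Qed.

Definition share n (p q : zvec n) := exists j, 0 < p j /\ 0 < q j.

Lemma first_step (T : eqType) (e : rel T) x p :
  path e x p -> last x p != x -> exists z, z \in p /\ z != x /\ e x z.
Proof.
elim: p x => [|z p IH] x /=; first by rewrite eqxx.
move=> /andP [exz pz] hl. case: (eqVneq z x) => [ezx|nzx].
  subst z. have [w [win [nw ew]]] := IH x pz hl.
  by exists w; rewrite inE win orbT.
by exists z; rewrite mem_head.
Qed.

Definition noPos n (L : zvec n -> Prop) u :=
  ~ exists z, in_fiber L u z /\ forall j, 0 < z j.

Lemma min_lower n (L : zvec n -> Prop) u p q : antichain_lattice L ->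
  in_fiber L u p -> in_fiber L u q -> share p q ->
  let g := vmin p q in
  [/\ lower L (p - g) u, in_fiber L (p - g) (p - g), in_fiber L (p - g) (q - g),
      in_Nn g & forall z, in_fiber L (p - g) z -> in_fiber L u (z + g)].
Proof.
move=> HL hp hq [j [pj qj]] /=.
have gnn : in_Nn (vmin p q) by move=> m; have := hp.1 m; have := hq.1 m; vlia.
have pgnn : in_Nn (p - (vmin p q)) by move=> m; have := hp.1 m; have := hq.1 m; vlia.
split => //.
- split => //; exists (vmin p q); split => //; split; first by exists j; vlia.
  by rewrite subrK; apply: hp.2.
- by apply: fib_self.
- split; first by move=> m; have := hp.1 m; have := hq.1 m; vlia.
  have -> : q - (vmin p q) - (p - (vmin p q)) = q - p by apply/ffunP => m; vlia.
  exact: fib_diff HL hq hp.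
- move=> z [hz hzL]; split; first by move=> m; have := hz m; have := gnn m; vlia.
  have -> : z + (vmin p q) - u = (z - (p - (vmin p q))) + (p - u) by apply/ffunP => m; vlia.
  exact: LD HL hzL hp.2.
Qed.

Lemma forward_Q n (L : zvec n -> Prop) (B : seq (zvec n)) : antichain_lattice L ->
  markov_basis L B -> (forall b, b \in B -> fully_supported b) ->
  forall u, in_Nn u -> noPos L u -> forall x y, in_fiber L u x -> in_fiber L u y ->
    forall i, x i = 0 -> y i = 0 -> x = y.
Proof.
move=> HL hB hfs.
apply: (@fiber_ind n L (fun u => noPos L u -> forall x y, in_fiber L u x -> in_fiber L u y ->
    forall i, x i = 0 -> y i = 0 -> x = y) HL) => u hu IH H.
have A : forall p q, in_fiber L u p -> in_fiber L u q -> p != q -> share p q ->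
    forall k, 0 < p k \/ 0 < q k.
  move=> p q hp hq npq sh k; apply: NNPP => nk.
  have [low fp fq gnn lift] := min_lower HL hp hq sh.
  have noz : noPos L (p - (vmin p q)).
    move=> [z [hz zpos]]; apply: H; exists (z + (vmin p q)); split; first exact: lift.
    by move=> m; have := zpos m; have := gnn m; vlia.
  have E := IH _ low noz _ _ fp fq k.
  have : p - (vmin p q) = q - (vmin p q).
    apply: E; have := hp.1 k; have := hq.1 k; vlia.
  move/(congr1 (fun v => v + (vmin p q))); rewrite !subrK => epq.
  by rewrite epq eqxx in npq.
have Bst : forall x y, in_fiber L u x -> in_fiber L u y -> x != y -> forall i, x i = 0 -> y i = 0 ->
    forall z, in_fiber L u z -> z != x -> ~ share x z.
  move=> x y hx hy nxy i xi yi z hz nzx shxz.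
  have Axz := A x z hx hz (ltac:(by rewrite eq_sym)) shxz.
  have nsh : ~ share x y.
    by move=> sh; have := A x y hx hy nxy sh i; vlia.
  have [k yk] := fib_nonzero HL hx hy nxy.
  have xk : x k = 0.
    have := hx.1 k; have : ~ (0 < x k /\ 0 < y k) by move=> h; apply: nsh; exists k.
    vlia.
  have zk : 0 < z k by case: (Axz k) => //; vlia.
  have nzy : z != y.
    apply/eqP => ezy; apply: nsh; by rewrite -ezy.
  have Ayz := A y z hy hz (ltac:(by rewrite eq_sym)) (ex_intro _ k (conj yk zk)).
  apply: H; exists z; split => // m.
  case: (Axz m) => // xm; case: (Ayz m) => // ym; exfalso; apply: nsh; by exists m.
move=> x y hx hy i xi yi.
case: (eqVneq x y) => // nxy; exfalso.
have [p [pin [pth plast]]] := hB.2 u hu x y hx hy.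
have [z [zin [nzx adj]]] := first_step pth (ltac:(by rewrite plast eq_sym)).
have hz := pin z zin.
have nshxz := Bst x y hx hy nxy i xi yi z hz nzx.
have cover : forall m, 0 < x m \/ 0 < z m.
  move=> m; apply: NNPP => nc.
  have fs : (x - z) m != 0.
    move: adj; rewrite /fadj => /orP [hb|hb]; first exact: hfs _ hb m.
    by have := hfs _ hb m; rewrite -opprB voppE oppr_eq0.
  move: fs; have := hx.1 m; have := hz.1 m; vlia.
case: (eqVneq z y) => [ezy|nzy].
  by have := cover i; rewrite ezy; vlia.
have [k yk] := fib_nonzero HL hx hy nxy.
have nshyx := Bst y x hy hx (ltac:(by rewrite eq_sym)) i yi xi x hx nxy.
have nshyz := Bst y x hy hx (ltac:(by rewrite eq_sym)) i yi xi z hz nzy.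
by case: (cover k) => h; [apply: nshyx | apply: nshyz]; exists k; split.
Qed.

Lemma forward n (L : zvec n -> Prop) : antichain_lattice L ->
  markov_generic L -> set_generic L.
Proof.
move=> HL [B [[hB _] hfs]] eta Heta X nX a b La Lb [aT aX] [bT bX].
have [i iX] := set0Pn X nX.
have hx : in_Nn (eta - a) by move=> j; have := aT j; vlia.
have noz : noPos L (eta - a).
  move=> [z [[hz hzL] zpos]]; apply: (Heta (eta - z)).
    have -> : eta - z = a - (z - (eta - a)) by apply/ffunP => j; vlia.
    exact: LB.
  by move=> j; have := zpos j; vlia.
have fx : in_fiber L (eta - a) (eta - a) by apply: fib_self.
have fy : in_fiber L (eta - a) (eta - b).
  split; first by move=> j; have := bT j; vlia.
  have -> : (eta - b) - (eta - a) = a - b by apply/ffunP => j; vlia.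
  exact: LB.
have E := forward_Q HL hB hfs hx noz fx fy (i := i) _ _.
have : (eta - a) = (eta - b).
  apply: E; [have := aX i iX | have := bX i iX]; vlia.
move/ffunP => Exy; apply/ffunP => j; have := Exy j; vlia.
Qed.

Definition Dset n (L : zvec n -> Prop) (c : zvec n) :=
  L c /\ fully_supported c /\
  ~ exists z, in_fiber L (posv c) z /\ share z (posv c) /\ share z (negv c).

Lemma D_finite n (L : zvec n -> Prop) : antichain_lattice L ->
  exists s : seq (zvec n), forall c, Dset L c -> c \in s.
Proof.
move=> HL.
pose phi (c : zvec n) : {ffun ('I_n + 'I_n)%type -> int} :=
  [ffun k => match k with inl i => posv c i | inr i => negv c i end].
pose psi (a : {ffun ('I_n + 'I_n)%type -> int}) : zvec n := [ffun i => a (inl i) - a (inr i)].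
have psiphi : forall c, psi (phi c) = c.
  by move=> c; apply/ffunP => i; rewrite !ffunE; vlia.
have key : forall c d, Dset L c -> Dset L d ->
    (forall i, posv c i <= posv d i) -> (forall i, negv c i <= negv d i) -> c = d.
  move=> c d [Lc [fsc Dc]] [Ld [fsd Dd]] hp hn.
  case: (classic (c = d)) => // ncd; exfalso.
  have cnz : c != 0.
    apply/eqP => c0; apply: ncd; apply/ffunP => i; have := fsc i; by rewrite c0 vzeroE eqxx.
  have [H1 H2] := HL.2 0 c (L0 HL) Lc (ltac:(by rewrite eq_sym)).
  have [j cj] : exists j, c j < 0.
    apply: NNPP => nj; apply: H1 => i; rewrite vzeroE.
    have : ~ (c i < 0) by move=> h; apply: nj; exists i.
    vlia.
  have [j' cj'] : exists j, 0 < c j.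
    apply: NNPP => nj; apply: H2 => i; rewrite vzeroE.
    have : ~ (0 < c i) by move=> h; apply: nj; exists i.
    vlia.
  have Ep : posv c = posv d.
    apply/ffunP => i; apply: NNPP => ne; apply: Dd.
    exists (posv d - c); split; [split|split].
    - by move=> m; have := hp m; vlia.
    - have -> : posv d - c - posv d = - c by apply/ffunP => m; vlia.
      exact: LN.
    - by exists i; have := hp i; move: ne; vlia.
    - by exists j; have := hp j; have := hn j; vlia.
  have En : negv c = negv d.
    apply/ffunP => i; apply: NNPP => ne; apply: Dd.
    exists (negv d + c); split; [split|split].
    - by move=> m; have := hn m; vlia.
    - have -> : negv d + c - posv d = c - d by apply/ffunP => m; vlia.
      exact: LB.
    - by exists j'; have := hp j'; have := hn j'; vlia.
    - by exists i; have := hn i; move: ne; vlia.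
  apply: ncd; apply/ffunP => i.
  have e1 : posv c i = posv d i by rewrite Ep.
  have e2 : negv c i = negv d i by rewrite En.
  move: e1 e2; vlia.
have [|| s [_ Hs]] := @dickson ('I_n + 'I_n)%type (fun a => exists c, Dset L c /\ a = phi c).
- by move=> a [c [_ ->]] [i|i]; rewrite ffunE; vlia.
- move=> a b [c [Dc ->]] [d [Dd ->]] le.
  rewrite (key c d Dc Dd) // => i.
  + by have := le (inl i); rewrite !ffunE.
  + by have := le (inr i); rewrite !ffunE.
exists (map psi s) => c Dc.
by rewrite -[c]psiphi; apply: map_f; apply: Hs; exists c.
Qed.

Lemma filter_classic (T : eqType) (P : T -> Prop) (s : seq T) :
  exists B : seq T, forall c, c \in B <-> (c \in s /\ P c).
Proof.
elim: s => [|x s [B HB]]; first by exists [::] => c; split => // [[]].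
case: (classic (P x)) => Px.
- exists (x :: B) => c; rewrite !inE; split.
  + by case/orP => [/eqP ->|/HB [cs Pc]]; [rewrite eqxx | rewrite cs orbT].
  + case=> /orP [/eqP ->|cs] Pc; first by rewrite eqxx.
    by apply/orP; right; apply/HB.
- exists B => c; rewrite inE; split.
  + by move/HB => [cs Pc]; rewrite cs orbT.
  + case=> /orP [/eqP ->|cs] Pc; first by [].
    by apply/HB.
Qed.

Definition conn n (L : zvec n -> Prop) (B : seq (zvec n)) u v w :=
  exists p : seq (zvec n),
    (forall x, x \in p -> in_fiber L u x) /\ path (fadj B) v p /\ last v p = w.

Lemma conn_refl n (L : zvec n -> Prop) B u v : conn L B u v v.
Proof. by exists [::]. Qed.

Lemma conn_trans n (L : zvec n -> Prop) B u v w z :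
  conn L B u v w -> conn L B u w z -> conn L B u v z.
Proof.
move=> [p [hp [pp lp]]] [q [hq [pq lq]]]; exists (p ++ q); split; [|split].
- by move=> x; rewrite mem_cat => /orP [/hp|/hq].
- by rewrite cat_path pp lp pq.
- by rewrite last_cat lp.
Qed.

Lemma conn_lift n (L : zvec n -> Prop) B u u' v w g :
  conn L B u' v w -> (forall x, in_fiber L u' x -> in_fiber L u (x + g)) ->
  conn L B u (v + g) (w + g).
Proof.
move=> [p [hp [pp lp]]] lift; exists (map (fun x => x + g) p); split; [|split].
- by move=> x /mapP [y yp ->]; apply: lift; apply: hp.
- have E : forall a b : zvec n, (a + g) - (b + g) = a - b.
    by move=> a b; apply/ffunP => i; vlia.
  elim: p v pp {hp lp} => [|x p IH] v //= /andP [hvx hp].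
  by rewrite IH // andbT /fadj !E.
- by rewrite (last_map (fun x => x + g)) lp.
Qed.

Lemma D_markov n (L : zvec n -> Prop) (B : seq (zvec n)) : antichain_lattice L ->
  set_generic L -> (forall c, Dset L c -> c \in B) -> (forall c, c \in B -> L c) ->
  markov_basis L B.
Proof.
move=> HL SG hB hBL; split => //.
apply: (@fiber_ind n L (fiber_connected L B) HL) => u hu IH v w hv hw.
have shc : forall v w, in_fiber L u v -> in_fiber L u w -> share v w -> conn L B u v w.
  move=> p q hp hq sh.
  have [low fp fq gnn lift] := min_lower HL hp hq sh.
  have := conn_lift (IH _ low _ _ fp fq) lift.
  by rewrite !subrK.
case: (classic (share v w)) => [sh|nsh]; first exact: shc.
case: (eqVneq v w) => [->|nvw]; first exact: conn_refl.
case: (classic (exists i, v i = 0 /\ w i = 0)) => [[i [vi wi]]|nz].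
- case: (classic (exists a, L a /\ in_To v a)) => [[a [La aT]]|na].
  + have hz : in_fiber L u (v - a).
      split; first by move=> j; have := aT j; vlia.
      have -> : v - a - u = (v - u) - a by apply/ffunP => j; vlia.
      exact: LB HL hv.2 La.
    have [k vk] := fib_nonzero HL hw hv (ltac:(by rewrite eq_sym)).
    have [k' wk'] := fib_nonzero HL hv hw nvw.
    apply: (conn_trans (w := v - a)); apply: shc => //.
    * by exists k; split => //; have := aT k; have := hv.1 k; vlia.
    * by exists k'; split => //; have := aT k'; have := hw.1 k'; vlia.
  + exfalso.
    have E : (0 : zvec n) = v - w.
      apply: (SG v (fun a La aT => na (ex_intro _ a (conj La aT))) [set i]
        (ltac:(by apply/set0Pn; exists i; rewrite in_set1)) 0 (v - w) (L0 HL)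
        (fib_diff HL hv hw)).
      * split; first by move=> j; rewrite vzeroE; apply: hv.1.
        by move=> j /set1P ->; rewrite vzeroE.
      * split; first by move=> j; have := hw.1 j; vlia.
        by move=> j /set1P ->; vlia.
    move/ffunP: E => E; move/negP: nvw; apply; apply/eqP/ffunP => j.
    by have := E j; vlia.
- have nzj : forall j, ~ (v j = 0 /\ w j = 0) by move=> j h; apply: nz; exists j.
  have nsj : forall j, ~ (0 < v j /\ 0 < w j) by move=> j h; apply: nsh; exists j.
  have fs : fully_supported (v - w).
    by move=> j; have := nzj j; have := nsj j; have := hv.1 j; have := hw.1 j; vlia.
  have Ep : posv (v - w) = v.
    by apply/ffunP => j; have := nzj j; have := nsj j; have := hv.1 j; have := hw.1 j; vlia.
  have En : negv (v - w) = w.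
    by apply/ffunP => j; have := nzj j; have := nsj j; have := hv.1 j; have := hw.1 j; vlia.
  case: (classic (Dset L (v - w))) => [Dc|nD].
    exists [:: w]; split; [|split] => //=.
    + by move=> x; rewrite inE => /eqP ->.
    + by rewrite /fadj hB.
  have [z [hz [sh1 sh2]]] : exists z, in_fiber L (posv (v - w)) z /\
       share z (posv (v - w)) /\ share z (negv (v - w)).
    apply: NNPP => nex; apply: nD; split; first exact: fib_diff HL hv hw.
    by split.
  rewrite Ep En in hz sh1 sh2.
  have hz' : in_fiber L u z.
    split; first exact: hz.1.
    have -> : z - u = (z - v) + (v - u) by apply/ffunP => j; vlia.
    exact: LD HL hz.2 hv.2.
  apply: (conn_trans (w := z)); apply: shc => //.
  by case: sh1 => j [h1 h2]; exists j.
Qed.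

Lemma markov_eq n (L : zvec n -> Prop) (B1 B2 : seq (zvec n)) :
  B1 =i B2 -> markov_basis L B1 -> markov_basis L B2.
Proof.
move=> E [h1 h2]; split; first by move=> b; rewrite -E; apply: h1.
move=> u hu v w hv hw; have [p [hp [pp lp]]] := h2 u hu v w hv hw.
exists p; split; [done|split => //].
by rewrite -(eq_path (e := fadj B1)) // => x y; rewrite /fadj !E.
Qed.

Lemma extract n (L : zvec n -> Prop) N : forall (B0 : seq (zvec n)),
  (size B0 < N)%N -> markov_basis L B0 ->
  exists B, {subset B <= B0} /\ minimal_markov_basis L B.
Proof.
elim: N => // N IH B0 hs hm.
case: (classic (forall B', {subset B' <= B0} -> markov_basis L B' -> {subset B0 <= B'}))
  => [hmin|nmin].
  by exists B0; split => //; split.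
have [B' nB'] := not_all_ex_not _ _ nmin.
have [sub nB''] := imply_to_and _ _ nB'.
have [mB' nsub] := imply_to_and _ _ nB''.
have [b hb] := not_all_ex_not _ _ nsub.
have [bB0 nbB'] := imply_to_and _ _ hb.
pose B1 := [seq x <- B0 | x \in B'].
have E : B' =i B1.
  by move=> x; rewrite mem_filter; case: (boolP (x \in B')) => // /sub ->.
have hs1 : (size B1 < N)%N.
  have h : (count (fun x => x \in B') B0 < size B0)%N.
    rewrite -(count_predC (fun x => x \in B') B0) -addn1 leq_add2l -has_count.
    by apply/hasP; exists b => //=; apply/negP.
  rewrite size_filter; exact: leq_trans h (ltnSE hs).
have [B [subB minB]] := IH B1 hs1 (markov_eq E mB').
exists B; split => // x /subB; rewrite mem_filter => /andP [].
by [].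
Qed.

Lemma backward n (L : zvec n -> Prop) : antichain_lattice L ->
  set_generic L -> markov_generic L.
Proof.
move=> HL SG.
have [s Hs] := D_finite HL.
have [B0 HB0] := filter_classic (Dset L) s.
have mB0 : markov_basis L B0.
  apply: D_markov HL SG _ _.
  - by move=> c Dc; apply/HB0; split => //; apply: Hs.
  - by move=> c /HB0 [_ [Lc _]].
have [B [sub minB]] := extract (N := (size B0).+1) (ltnSn _) mB0.
exists B; split => // b /sub /HB0 [_ [_ [fs _]]].
exact: fs.
Qed.

Theorem mainTheorem10 (n : nat) (L : zvec n -> Prop) :
  antichain_lattice L -> (markov_generic L <-> set_generic L).
Proof.
move=> HL; split; [exact: forward | exact: backward].
Qed.
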